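(* Fix $n,p$, a bandwidth $k$, a positive integer $|J_A|$, and constants $M>0$, $\kappa>0$, $\nu>0$. Let $p'=(2k+1)\sqrt{(p-k-1)(p-k)}$ and, for positive integers $a$, $$\rho_a=(Mp'/|J_A|)^{1/a}(a!)^{1/(2a)}\kappa^{1/2}\nu n^{-1/2}.$$ Considering $\rho_a$ as a function of the integer order $a$: (i) if $|J_A|\ge Mp'$, the minimum of $\rho_a$ is achieved at $a=1$; (ii) if $|J_A|<Mp'$, the minimum of $\rho_a$ is achieved at some $a$, which increases as $Mp'/|J_A|$ increases.
   Context: In the paper, $\rho_a$ is the common signal strength $\sigma_{j_1j_2}=\rho$ (for $(j_1,j_2)$ in the signal set $J_A$ of size $|J_A|$ outside the band $|j_1-j_2|\le k$) at which the test based on the order-$a$ U-statistic attains asymptotic power $\Phi(-z_{1-\alpha}+M/\sqrt2)$, in the special case where the in-band covariances equal $\nu$ and the moment constant is $\kappa$; $n$ is the sample size and $p$ the dimension. *)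

(* Defs.v *)
From HB Require Import structures.
From mathcomp Require Import all_boot all_order all_algebra.
From mathcomp Require Import all_classical all_reals all_analysis.
Set Implicit Arguments. Unset Strict Implicit. Unset Printing Implicit Defensive.
Import Order.TTheory GRing.Theory Num.Theory.
Local Open Scope ring_scope.

(* p' = (2k+1) sqrt((p-k-1)(p-k)), computed in R (no truncated subtraction). *)
Definition pprime (R : realType) (p k : nat) : R :=
  (2 * k%:R + 1) * Num.sqrt ((p%:R - k%:R - 1) * (p%:R - k%:R)).

Definition rho (R : realType) (n p k JA : nat) (M kappa nu : R) (a : nat) : R :=
  powR (M * pprime R p k / JA%:R) (a%:R^-1)
  * powR ((a`!)%:R) ((2 * a%:R)^-1)
  * powR kappa (2^-1) * nu * powR (n%:R) (- 2^-1).

Definition is_min_order (R : realType) (n p k JA : nat) (M kappa nu : R)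
  (a : nat) : Prop :=
  (0 < a)%N /\ forall b : nat, (0 < b)%N ->
    rho n p k JA M kappa nu a <= rho n p k JA M kappa nu b.

(* Main.v *)
Require Import Defs.
From HB Require Import structures.
From mathcomp Require Import all_boot all_order all_algebra.
From mathcomp Require Import all_classical all_reals all_analysis.
Import Order.TTheory GRing.Theory Num.Theory.
Local Open Scope ring_scope.

Definition GG (R : realType) (x : R) (a : nat) : R :=
  powR x (a%:R^-1) * powR ((a`!)%:R) ((2 * a%:R)^-1).
Arguments GG {R}.


Lemma rhoE (R : realType) (n p k JA : nat) (M kappa nu : R) a :
  rho n p k JA M kappa nu a =
  GG (M * pprime R p k / JA%:R) a * (powR kappa (2^-1) * nu * powR (n%:R) (- 2^-1)).
Proof. by rewrite /rho /GG !mulrA. Qed.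

Lemma cst_gt0 (R : realType) (n : nat) (kappa nu : R) :
  (0 < n)%N -> 0 < kappa -> 0 < nu ->
  0 < powR kappa (2^-1) * nu * powR (n%:R) (- 2^-1).
Proof. by move=> n0 k0 nu0; rewrite !mulr_gt0 // powR_gt0 // ltr0n. Qed.

Lemma powR_ge1 (R : realType) (x e : R) : 1 <= x -> 0 <= e -> 1 <= powR x e.
Proof. by move=> x1 e0; rewrite -(powRr0 x); apply: ler_powR. Qed.

Lemma F_ge1 (R : realType) (a : nat) : 1 <= powR ((a`!)%:R : R) ((2 * a%:R)^-1).
Proof.
apply: powR_ge1; first by rewrite ler1n fact_gt0.
by rewrite invr_ge0 mulr_ge0.
Qed.

Lemma G1 (R : realType) (x : R) : 0 <= x -> GG x 1 = x.
Proof. by move=> x0; rewrite /GG invr1 powRr1 // powR1 mulr1. Qed.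

Lemma G_i (R : realType) (x : R) b : 0 <= x -> x <= 1 -> (0 < b)%N -> x <= GG x b.
Proof.
move=> x0 x1 b0; rewrite le_eqVlt in x0; case/orP: x0 => [/eqP <-|x0].
  by rewrite /GG mulr_ge0 // powR_ge0.
apply: (le_trans (ger1_powR (r := b%:R^-1) _ _)).
- by rewrite x0 x1.
- by rewrite invf_le1 ?ltr0n // ler1n.
by apply: ler_peMr; [exact: powR_ge0 | exact: F_ge1].
Qed.

Lemma G_mono (R : realType) (x1 x2 : R) a a2 : 1 < x1 -> x1 < x2 ->
  (0 < a)%N -> (0 < a2)%N -> GG x1 a <= GG x1 a2 -> GG x2 a2 <= GG x2 a ->
  (a <= a2)%N.
Proof.
move=> x11 x12 a0 a20 H1 H2; rewrite leqNgt; apply/negP => lt.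
set e : R := a2%:R^-1 - a%:R^-1.
have e0 : 0 < e by rewrite subr_gt0 ltf_pV2 ?posrE ?ltr0n // ltr_nat.
have dec : forall x : R, 0 < x -> powR x (a2%:R^-1) = powR x (a%:R^-1) * powR x e.
  move=> x xp; rewrite -powRD; last by apply/implyP => _; rewrite gt_eqF.
  by rewrite /e addrC subrK.
have x1p : 0 < x1 by apply: lt_trans x11.
have x2p : 0 < x2 by apply: lt_trans x12.
move: H1 H2; rewrite /GG !dec //.
set P1 := powR x1 _; set P2 := powR x2 _.
set Fa := powR _ ((2 * a%:R)^-1); set Fa2 := powR _ ((2 * a2%:R)^-1).
have P1p : 0 < P1 by apply: powR_gt0.
have P2p : 0 < P2 by apply: powR_gt0.
have Fa2p : 0 < Fa2 by apply: lt_le_trans (F_ge1 _ _).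
rewrite -!mulrA !ler_pM2l // => H1 H2.
have := le_trans H2 H1; rewrite ler_pM2r // => H.
have : powR x1 e < powR x2 e.
  by apply: gt0_ltr_powR => //; rewrite nnegrE ltW.
by rewrite ltNge H.
Qed.

Lemma fact_ge_pow m c : (m ^ c <= (c + m)`!)%N.
Proof.
elim: c => [|c IH]; first by rewrite expn0 add0n fact_gt0.
rewrite addSn factS expnS; apply: leq_mul => //.
by apply: (leq_trans (leq_addl c m)); exact: leqnSn.
Qed.

Lemma G_exists {R : realType} (x : R) : 1 < x ->
  exists N, forall b, (N < b)%N -> x <= GG x b.
Proof.
move=> x1; have x0 : 0 <= x by rewrite ltW // (lt_trans ltr01).
set y := x ^+ 2.
have y0 : 0 <= y by rewrite exprn_ge0.
set m := (Num.Def.trunc (2 * y)).+1.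
have hm : 2 * y <= m%:R by rewrite ltW // truncnS_gt.
set K := (Num.Def.trunc (y ^+ m)).+1.
have hK : y ^+ m <= K%:R by rewrite ltW // truncnS_gt.
exists (K + m)%N => b hb.
have mb : (m <= b)%N by apply: leq_trans (ltnW hb); rewrite leq_addl.
have Kc : (K <= b - m)%N by rewrite leq_subRL // addnC ltnW.
have key : x ^+ (2 * b) <= (b`!)%:R.
  rewrite exprM -/y -(subnK mb) exprD.
  set c := (b - m)%N in Kc *.
  apply: (le_trans (y := y ^+ c * 2 ^+ c)).
    have yp : 0 < y by rewrite exprn_gt0 // (lt_trans ltr01).
    rewrite ler_pM2l; last by rewrite exprn_gt0.
    apply: (le_trans hK); rewrite -natrX ler_nat.
    by apply: (leq_trans Kc); apply: ltnW; apply: ltn_expl.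
  apply: (le_trans (y := m%:R ^+ c)).
    by rewrite -exprMn mulrC; apply: lerXn2r; rewrite ?nnegrE ?mulr_ge0 // ler0n.
  by rewrite -natrX ler_nat fact_ge_pow.
have b0 : (0 < b)%N by apply: leq_ltn_trans hb.
have hF : x <= powR ((b`!)%:R) ((2 * b%:R)^-1).
  have -> : x = powR (x ^+ (2 * b)) ((2 * b%:R)^-1).
    rewrite -powR_mulrn // -powRrM natrM mulfV ?powRr1 //.
    by rewrite mulf_neq0 // pnatr_eq0 -lt0n.
  apply: ge0_ler_powR => //.
  - by rewrite nnegrE exprn_ge0.
  - by rewrite nnegrE ler0n.
apply: (le_trans hF); rewrite /GG; apply: ler_peMl; first exact: powR_ge0.
by apply: powR_ge1; [exact: ltW | rewrite invr_ge0 ler0n].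
Qed.
Lemma pprime_ge0 (R : realType) p k : 0 <= pprime R p k.
Proof. by rewrite /pprime mulr_ge0 ?sqrtr_ge0 // addr_ge0 // mulr_ge0. Qed.

Lemma fin_min {R : realType} (f : nat -> R) N : exists a, [/\ (0 < a)%N, (a <= N.+1)%N &
  forall b, (0 < b)%N -> (b <= N.+1)%N -> f a <= f b].
Proof.
elim: N => [|N [a [a0 aN Ha]]].
  exists 1%N; split => // b b0 b1.
  by have -> : b = 1%N by apply/eqP; rewrite eqn_leq b1 b0.
have [h|h] := leP (f a) (f N.+2).
  exists a; split => //; first by apply: leq_trans aN _.
  move=> b b0; rewrite leq_eqVlt => /orP[/eqP ->//|]; rewrite ltnS; exact: Ha.
exists N.+2; split => // b b0; rewrite leq_eqVlt => /orP[/eqP ->//|]; rewrite ltnS => bN.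
by apply: (le_trans (ltW h)); apply: Ha.
Qed.

Lemma exists_min (R : realType) (f : nat -> R) N :
  (forall b, (N < b)%N -> f 1%N <= f b) ->
  exists a, (0 < a)%N /\ forall b, (0 < b)%N -> f a <= f b.
Proof.
move=> H; have [a [a0 aN Ha]] := fin_min f N.
exists a; split => // b b0.
have [bN|bN] := leqP b N.+1; first exact: Ha.
apply: (le_trans (Ha 1%N _ _)) => //; apply: H; exact: ltnW.
Qed.

Arguments cst_gt0 {R n kappa nu}.
Arguments G_mono {R x1 x2 a a2}.
Arguments G_i {R x b}.
Arguments G1 {R x}.

Theorem proposition1 (R : realType) (n p k JA : nat) (M kappa nu : R) :
  (0 < n)%N -> (0 < JA)%N -> 0 < M -> 0 < kappa -> 0 < nu ->
  (* (i) *)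
  (M * pprime R p k <= JA%:R ->
     is_min_order n p k JA M kappa nu 1%N) /\
  (* (ii) existence of a minimizer *)
  (JA%:R < M * pprime R p k ->
     exists a : nat, is_min_order n p k JA M kappa nu a) /\
  (* (ii) the minimizer is nondecreasing in M p' / |J_A| *)
  (forall (n2 p2 k2 JA2 : nat) (M2 kappa2 nu2 : R),
     (0 < n2)%N -> (0 < JA2)%N -> 0 < M2 -> 0 < kappa2 -> 0 < nu2 ->
     JA%:R < M * pprime R p k ->
     M * pprime R p k / JA%:R < M2 * pprime R p2 k2 / JA2%:R ->
     forall a a2 : nat,
       is_min_order n p k JA M kappa nu a ->
       is_min_order n2 p2 k2 JA2 M2 kappa2 nu2 a2 ->
       (a <= a2)%N).
Proof.
move=> n0 JA0 M0 k0 nu0.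
have Xge0 : forall (p k JA : nat) (M : R), 0 < M -> 0 <= M * pprime R p k / JA%:R.
  by move=> p1 k1 JA1 M1 M10; rewrite divr_ge0 ?ler0n // mulr_ge0 ?pprime_ge0 // ltW.
have JAp : 0 < (JA%:R : R) by rewrite ltr0n.
have c0 := cst_gt0 n0 k0 nu0.
split; [|split].
- move=> hle; split => // b b0.
  rewrite !rhoE ler_pM2r // G1 ?Xge0 //; apply: G_i => //; first exact: Xge0.
  by rewrite ler_pdivrMr // mul1r.
- move=> hlt.
  have X1 : 1 < M * pprime R p k / JA%:R by rewrite ltr_pdivlMr // mul1r.
  have [N HN] := G_exists _ X1.
  apply: (@exists_min R (rho n p k JA M kappa nu) N) => b hb.
  by rewrite !rhoE ler_pM2r // G1 ?Xge0 //; apply: HN.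
- move=> n2 p2 k2 JA2 M2 kappa2 nu2 n20 JA20 M20 k20 nu20 hlt hX a a2 [a0 Ha] [a20 Ha2].
  have X1 : 1 < M * pprime R p k / JA%:R by rewrite ltr_pdivlMr // mul1r.
  have c20 := cst_gt0 n20 k20 nu20.
  apply: (G_mono X1 hX a0 a20).
  + by have := Ha a2 a20; rewrite !rhoE ler_pM2r.
  + by have := Ha2 a a0; rewrite !rhoE ler_pM2r.
Qed.
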